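(* For the Lr $(\mathbf a,\tau)$ interval exchange transformation $T$ and its dual $\tilde T$ (with no further hypotheses), the associated subshift satisfies $X=\mathcal I([0,1))\cup\tilde{\mathcal I}((0,1])$.
   Context: Fix $n\ge 2$, $[n]=\{1,\dots,n\}$, a vector $\mathbf a=(a_1,\dots,a_n)$ with all $a_i>0$ and $\sum_i a_i=1$, and a permutation $\tau$ of $[n]$. Put $b_0=0$, $b_i=\sum_{j=1}^i a_j$, $J_i=[b_{i-1},b_i)$, $\tilde J_i=(b_{i-1},b_i]$, $D=\{b_1,\dots,b_{n-1}\}$, $b^\tau_0=0$, $b^\tau_i=\sum_{j=1}^i a_{\tau^{-1}(j)}$. $T:[0,1)\to[0,1)$ and $\tilde T:(0,1]\to(0,1]$ are defined by $x\mapsto x-b_{i-1}+b^\tau_{\tau(i)-1}$ for $x\in J_i$ (resp. $x\in\tilde J_i$); both are bijections. $\Omega=[n]^{\mathbb Z}$ with the product topology. The itinerary maps are $\mathcal I(x)_k=i\iff T^kx\in J_i$ and $\tilde{\mathcal I}(x)_k=i\iff\tilde T^kx\in\tilde J_i$ ($k\in\mathbb Z$). $D_\infty=\{0,1\}\cup\bigcup_{k\in\mathbb Z}T^k(D)$, $R=[0,1]\setminus D_\infty$, $X_0=\mathcal I(R)$, $X=\overline{X_0}$ (closure in $\Omega$). *)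

(* Defs.v *)
From HB Require Import structures.
From mathcomp Require Import all_boot all_order all_algebra all_fingroup.
From mathcomp Require Import all_classical all_reals all_analysis.
Set Implicit Arguments. Unset Strict Implicit. Unset Printing Implicit Defensive.
Import Order.TTheory GRing.Theory Num.Theory.
Local Open Scope classical_set_scope.
Local Open Scope ring_scope.

(* Conventions (0-indexed): the alphabet [n] = {1,..,n} is represented by
   'I_n = {0,..,n-1}, letter i : 'I_n standing for i+1.
   a : 'I_n -> R, tau : {perm 'I_n}. *)

Section IET.
Variables (R : realType) (n : nat) (a : 'I_n -> R) (tau : {perm 'I_n}).

Definition bb (k : nat) : R := \sum_(j < n | (j < k)%N) a j.
Definition bbtau (k : nat) : R := \sum_(j < n | (j < k)%N) a ((tau^-1)%g j).

(* J_i = [b_{i-1}, b_i)  and  ~J_i = (b_{i-1}, b_i]  (1-indexed);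
   here for i : 'I_n (0-indexed) : [bb i, bb i.+1) and (bb i, bb i.+1]. *)
Definition J (i : 'I_n) : set R := [set x | bb i <= x < bb i.+1].
Definition Jt (i : 'I_n) : set R := [set x | bb i < x <= bb i.+1].

(* x |-> x - b_{i-1} + b^tau_{tau(i)-1} for x in J_i (resp. ~J_i) *)
Definition Tmap (x : R) : R :=
  \sum_(i < n) (if (bb i <= x) && (x < bb i.+1)
                then x - bb i + bbtau (tau i) else 0).
Definition Ttmap (x : R) : R :=
  \sum_(i < n) (if (bb i < x) && (x <= bb i.+1)
                then x - bb i + bbtau (tau i) else 0).

Definition dom0 : set R := [set x | 0 <= x < 1].
Definition dom1 : set R := [set x | 0 < x <= 1].

Definition Tinv (y : R) : R := xget 0 [set x | dom0 x /\ Tmap x = y].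
Definition Ttinv (y : R) : R := xget 0 [set x | dom1 x /\ Ttmap x = y].

Definition Tpow (k : int) (x : R) : R :=
  match k with Posz m => iter m Tmap x | Negz m => iter m.+1 Tinv x end.
Definition Ttpow (k : int) (x : R) : R :=
  match k with Posz m => iter m Ttmap x | Negz m => iter m.+1 Ttinv x end.

Definition Omega := {ptws int -> discrete_topology 'I_n}.

Definition is_itin (x : R) (w : Omega) : Prop := forall k : int, J (w k) (Tpow k x).
Definition is_itint (x : R) (w : Omega) : Prop := forall k : int, Jt (w k) (Ttpow k x).
Definition Itin (S : set R) : set Omega := [set w | exists2 x, S x & is_itin x w].
Definition Itint (S : set R) : set Omega := [set w | exists2 x, S x & is_itint x w].

Definition Dset : set R := [set bb k | k in [set k : nat | (1 <= k <= n.-1)%N]].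
Definition Dinf : set R :=
  [set 0; 1] `|` \bigcup_(k in [set: int]) (Tpow k @` Dset).
Definition Rgood : set R := [set x | 0 <= x <= 1] `\` Dinf.
Definition X0 : set Omega := Itin Rgood.
Definition Xsub : set Omega := closure X0.

End IET.

(* Main.v *)
Require Import Defs.
From HB Require Import structures.
From mathcomp Require Import all_boot all_order all_algebra all_fingroup.
From mathcomp Require Import all_classical all_reals all_analysis.
Set Implicit Arguments. Unset Strict Implicit. Unset Printing Implicit Defensive.
Import Order.TTheory GRing.Theory Num.Theory.
Import numFieldNormedType.Exports.
Local Open Scope classical_set_scope.
Local Open Scope ring_scope.
Set Default Proof Using "All".
Section PS.
Variables (R : realType) (n : nat) (c : 'I_n -> R).
Hypothesis Hc : forall i, 0 < c i.
Hypothesis Hs : \sum_(i < n) c i = 1.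

Definition S (k : nat) : R := \sum_(j < n | (j < k)%N) c j.

Lemma S0 : S 0 = 0.
Proof. by rewrite /S big_pred0. Qed.

Lemma S_split (i j : nat) : (i <= j)%N ->
  S j = S i + \sum_(k < n | (i <= k < j)%N) c k.
Proof.
move=> ij; rewrite /S (bigID (fun k : 'I_n => (k < i)%N)) /=; congr (_ + _).
  apply: eq_bigl => k; apply/idP/idP; first by case/andP.
  by move=> ki; rewrite ki andbT (leq_trans ki ij).
by apply: eq_bigl => k; rewrite -leqNgt andbC.
Qed.

Lemma S_mono (i j : nat) : (i <= j)%N -> S i <= S j.
Proof.
move=> ij; rewrite (S_split ij) lerDl; apply: sumr_ge0 => k _; exact: ltW.
Qed.

Lemma S_succ (i : 'I_n) : S i.+1 = S i + c i.
Proof.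
rewrite (S_split (leqnSn i)) (bigD1 i) /=; last by rewrite leqnn ltnSn.
rewrite big1 ?addr0 // => k /andP [/andP [ik ki] kni].
by exfalso; move: kni; rewrite -(inj_eq val_inj) /= eqn_leq ik -ltnS ki.
Qed.

Lemma S_top (k : nat) : (n <= k)%N -> S k = 1.
Proof.
move=> nk; rewrite /S -Hs; apply: eq_bigl => j.
by rewrite (leq_trans (ltn_ord j) nk).
Qed.

Lemma S_ge0 k : 0 <= S k.
Proof. rewrite -S0; exact: S_mono. Qed.

Lemma S_le1 k : S k <= 1.
Proof. rewrite -(S_top (leq_addl k n)); apply: S_mono; exact: leq_addr. Qed.

Lemma S_lt (i : 'I_n) : S i < S i.+1.
Proof. by rewrite S_succ ltrDl. Qed.

Lemma locL y : 0 <= y < 1 -> exists i : 'I_n, S i <= y < S i.+1.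
Proof.
case/andP => y0 y1.
suff H : forall k, (k <= n)%N -> y < S k -> exists i : 'I_n, S i <= y < S i.+1.
  by apply: (H n) => //; rewrite S_top.
elim => [|k IH] kn yk; first by move: yk; rewrite S0 ltNge y0.
case: (leP (S k) y) => Hk.
  by exists (Ordinal kn); rewrite Hk yk.
exact: IH (ltnW kn) Hk.
Qed.

Lemma locR y : 0 < y <= 1 -> exists i : 'I_n, S i < y <= S i.+1.
Proof.
case/andP => y0 y1.
suff H : forall k, (k <= n)%N -> y <= S k -> exists i : 'I_n, S i < y <= S i.+1.
  by apply: (H n) => //; rewrite S_top.
elim => [|k IH] kn yk; first by move: yk; rewrite S0 leNgt y0.
case: (ltP (S k) y) => Hk.
  by exists (Ordinal kn); rewrite Hk yk.
exact: IH (ltnW kn) Hk.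
Qed.

Lemma uniqL (i j : 'I_n) y : S i <= y < S i.+1 -> S j <= y < S j.+1 -> i = j.
Proof.
move=> /andP[a1 a2] /andP[b1 b2]; apply: val_inj => /=.
case: (ltngtP i j) => // h.
  by move: (S_mono h) => h'; have := le_lt_trans b1 a2; rewrite ltNge h'.
by move: (S_mono h) => h'; have := le_lt_trans a1 b2; rewrite ltNge h'.
Qed.

Lemma uniqR (i j : 'I_n) y : S i < y <= S i.+1 -> S j < y <= S j.+1 -> i = j.
Proof.
move=> /andP[a1 a2] /andP[b1 b2]; apply: val_inj => /=.
case: (ltngtP i j) => // h.
  by move: (S_mono h) => h'; have := lt_le_trans b1 a2; rewrite ltNge h'.
by move: (S_mono h) => h'; have := lt_le_trans a1 b2; rewrite ltNge h'.
Qed.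

End PS.

From mathcomp Require Import lra.
Set Default Proof Using "All".
Section IETg.
Variables (R : realType) (n : nat) (a : 'I_n -> R) (tau : {perm 'I_n}).
Hypothesis Ha : forall i, 0 < a i.
Hypothesis Hsum : \sum_(i < n) a i = 1.

Definition inI (b : bool) (l r x : R) : bool :=
  if b then (l <= x) && (x < r) else (l < x) && (x <= r).
Definition ct (j : 'I_n) := a ((tau^-1)%g j).
Let bb := bb a.
Let bbt := bbtau a tau.

Definition G b x := \sum_(i < n) (if inI b (bb i) (bb i.+1) x
                then x - bb i + bbt (tau i) else 0).
Definition Gi b y : R := xget 0 [set x | inI b 0 1 x /\ G b x = y].
Definition Gp b (k : int) (x : R) : R :=
  match k with Posz m => iter m (G b) x | Negz m => iter m.+1 (Gi b) x end.

Lemma Tpow_Gp : Tpow a tau = Gp true. Proof. by []. Qed.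
Lemma Ttpow_Gp : Ttpow a tau = Gp false. Proof. by []. Qed.

Lemma Hct j : 0 < ct j. Proof. exact: Ha. Qed.
Lemma Hsct : \sum_(j < n) ct j = 1.
Proof.
rewrite -Hsum /ct (reindex_inj (@perm_inj _ tau)) /=.
by apply: eq_bigr => i _; rewrite permK.
Qed.

Lemma bbE k : bb k = S a k. Proof. by []. Qed.
Lemma bbtE k : bbt k = S ct k. Proof. by []. Qed.

Lemma bb_succ (i : 'I_n) : bb i.+1 = bb i + a i.
Proof. exact: (S_succ Ha Hsum). Qed.
Lemma bbt_succ (i : 'I_n) : bbt (tau i).+1 = bbt (tau i) + a i.
Proof. by rewrite bbtE (S_succ Hct Hsct) /ct permK. Qed.

Lemma loc b y : inI b 0 1 y -> exists i : 'I_n, inI b (bb i) (bb i.+1) y.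
Proof. case: b => /= H; [exact: (locL Ha Hsum) | exact: (locR Ha Hsum)]. Qed.

Lemma loct b y : inI b 0 1 y -> exists i : 'I_n, inI b (bbt i) (bbt i.+1) y.
Proof. case: b => /= H; [exact: (locL Hct Hsct) | exact: (locR Hct Hsct)]. Qed.

Lemma uniq b (i j : 'I_n) y :
  inI b (bb i) (bb i.+1) y -> inI b (bb j) (bb j.+1) y -> i = j.
Proof. case: b => /=; [exact: (uniqL Ha Hsum) | exact: (uniqR Ha Hsum)]. Qed.

Lemma uniqt b (i j : 'I_n) y :
  inI b (bbt i) (bbt i.+1) y -> inI b (bbt j) (bbt j.+1) y -> i = j.
Proof. case: b => /=; [exact: (uniqL Hct Hsct) | exact: (uniqR Hct Hsct)]. Qed.

Lemma I_dom b (i : 'I_n) y : inI b (bb i) (bb i.+1) y -> inI b 0 1 y.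
Proof.
have h0 := S_ge0 Ha Hsum i; have h1 := S_le1 Ha Hsum i.+1.
rewrite /bb /= in h0 h1 *.
case: b => /= /andP [u v]; apply/andP; split.
- exact: le_trans u.
- exact: lt_le_trans h1.
- exact: le_lt_trans u.
- exact: le_trans h1.
Qed.

Lemma G_I b (i : 'I_n) x : inI b (bb i) (bb i.+1) x ->
  G b x = x - bb i + bbt (tau i).
Proof.
move=> Hx; rewrite /G (bigD1 i) //= Hx big1 ?addr0 // => j ji.
case: ifP => // Hj; exfalso; move: ji; rewrite (uniq Hj Hx) eqxx //.
Qed.

Lemma G_img b (i : 'I_n) x : inI b (bb i) (bb i.+1) x ->
  inI b (bbt (tau i)) (bbt (tau i).+1) (G b x).
Proof.
move=> Hx; rewrite (G_I Hx) bbt_succ; move: Hx; rewrite bb_succ.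
by case: b => /= /andP [u v]; apply/andP; split; lra.
Qed.

Lemma bbt_dom b (j : 'I_n) y : inI b (bbt j) (bbt j.+1) y -> inI b 0 1 y.
Proof.
have h0 := S_ge0 Hct Hsct j; have h1 := S_le1 Hct Hsct j.+1.
rewrite /bbt /= in h0 h1 *.
case: b => /= /andP [u v]; apply/andP; split.
- exact: le_trans u.
- exact: lt_le_trans h1.
- exact: le_lt_trans u.
- exact: le_trans h1.
Qed.

Lemma G_dom b x : inI b 0 1 x -> inI b 0 1 (G b x).
Proof. by case/loc => i /G_img /bbt_dom. Qed.

Lemma G_inj b x y : inI b 0 1 x -> inI b 0 1 y -> G b x = G b y -> x = y.
Proof.
case/loc => i Hi; case/loc => j Hj E.
have Ei := G_img Hi; have Ej := G_img Hj; rewrite E in Ei.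
have tij := uniqt Ei Ej; have ij : i = j by apply: (@perm_inj _ tau).
subst j; move: E; rewrite (G_I Hi) (G_I Hj) => E; lra.
Qed.

Lemma G_surj b y : inI b 0 1 y -> exists x, inI b 0 1 x /\ G b x = y.
Proof.
case/loct => j Hj; set i := (tau^-1)%g j.
have tj : tau i = j by rewrite /i permKV.
have Hx : inI b (bb i) (bb i.+1) (y - bbt j + bb i).
  move: Hj; rewrite -tj bbt_succ bb_succ.
  by case: b => /= /andP [u v]; apply/andP; split; lra.
exists (y - bbt j + bb i); split; first exact: I_dom Hx.
by rewrite (G_I Hx) tj; lra.
Qed.

Lemma Gi_spec b y : inI b 0 1 y -> inI b 0 1 (Gi b y) /\ G b (Gi b y) = y.
Proof.
move=> Hy; rewrite /Gi.
by have /(xgetPex 0) := G_surj Hy.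
Qed.

Lemma Gi_dom b y : inI b 0 1 y -> inI b 0 1 (Gi b y).
Proof. by case/Gi_spec. Qed.

Lemma G_Gi b y : inI b 0 1 y -> G b (Gi b y) = y.
Proof. by case/Gi_spec. Qed.

Lemma Gi_G b x : inI b 0 1 x -> Gi b (G b x) = x.
Proof.
move=> Hx; have [h1 h2] := Gi_spec (G_dom Hx).
exact: G_inj h1 Hx h2.
Qed.

End IETg.

From mathcomp Require Import lra zify.
Set Default Proof Using "All".
Section Dyn.
Variables (R : realType) (n : nat) (a : 'I_n -> R) (tau : {perm 'I_n}).
Hypothesis Ha : forall i, 0 < a i.
Hypothesis Hsum : \sum_(i < n) a i = 1.

Definition sh (b : bool) (d : R) := if b then d else - d.

Lemma locI b l r y : inI b l r y ->
  exists2 e, 0 < e & forall d, 0 <= d < e -> inI b l r (y + sh b d).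
Proof.
case: b => /= /andP [u v].
  by exists (r - y); [lra | move=> d /andP [d0 d1]; apply/andP; split; lra].
by exists (y - l); [lra | move=> d /andP [d0 d1]; apply/andP; split; lra].
Qed.

Lemma min_pos (e1 e2 : R) : 0 < e1 -> 0 < e2 -> 0 < Num.min e1 e2.
Proof. by move=> h1 h2; rewrite lt_min h1 h2. Qed.

Lemma min_lt (e1 e2 d : R) : 0 <= d < Num.min e1 e2 -> 0 <= d < e1 /\ 0 <= d < e2.
Proof. by case/andP => d0; rewrite lt_min d0 => /andP [-> ->]. Qed.

Let G := G a tau.
Let Gi := Gi a tau.
Let Gp := Gp a tau.
Let dom b := @inI R b 0 1.

Lemma G_loc b y : dom b y -> exists2 e, 0 < e & forall d, 0 <= d < e ->
  G b (y + sh b d) = G b y + sh b d /\ Gi b (y + sh b d) = Gi b y + sh b d.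
Proof.
move=> Hy; have [i Hi] := loc tau Ha Hsum Hy.
have [e1 e1p He1] := locI Hi.
have Hx := Gi_dom tau Ha Hsum Hy; have [j Hj] := loc tau Ha Hsum Hx.
have [e2 e2p He2] := locI Hj.
exists (Num.min e1 e2); first exact: min_pos.
move=> d /min_lt [d1 d2].
have E1 : G b (y + sh b d) = G b y + sh b d.
  by rewrite /G (G_I tau Ha Hsum (He1 _ d1)) (G_I tau Ha Hsum Hi); lra.
split => //.
have Hj' := He2 _ d2.
have E2 : G b (Gi b y + sh b d) = y + sh b d.
  by rewrite /G (G_I tau Ha Hsum Hj') -{2}(G_Gi tau Ha Hsum Hy) (G_I tau Ha Hsum Hj); lra.
rewrite -E2 /Gi (Gi_G tau Ha Hsum) //; exact (I_dom tau Ha Hsum Hj').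
Qed.

Definition RT b (f : R -> R) := forall y, dom b y ->
  exists2 e, 0 < e & forall d, 0 <= d < e -> f (y + sh b d) = f y + sh b d.
Definition Pres b (f : R -> R) := forall y, dom b y -> dom b (f y).

Lemma RT_comp b f g : RT b f -> RT b g -> Pres b g -> RT b (f \o g).
Proof.
move=> Hf Hg Pg y Hy; have [e1 e1p He1] := Hg y Hy.
have [e2 e2p He2] := Hf (g y) (Pg y Hy).
exists (Num.min e1 e2); first exact: min_pos.
by move=> d /min_lt [d1 d2] /=; rewrite He1 // He2.
Qed.

Lemma RT_id b : RT b id.
Proof. by move=> y _; exists 1 => //. Qed.

Lemma Pres_iter b f m : Pres b f -> Pres b (iter m f).
Proof. by move=> Pf; elim: m => [|m IH] y Hy //=; apply: Pf; apply: IH. Qed.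

Lemma RT_iter b f m : Pres b f -> RT b f -> RT b (iter m f).
Proof.
move=> Pf Hf; elim: m => [|m IH]; first exact: RT_id.
have -> : iter m.+1 f = f \o iter m f by apply: funext => y.
by apply: RT_comp => //; apply: Pres_iter.
Qed.

Lemma Pres_G b : Pres b (G b). Proof. move=> y; apply: (G_dom tau Ha Hsum). Qed.
Lemma Pres_Gi b : Pres b (Gi b). Proof. move=> y; apply: (Gi_dom tau Ha Hsum). Qed.
Lemma RT_G b : RT b (G b).
Proof. by move=> y /G_loc [e ep He]; exists e => // d /He []. Qed.
Lemma RT_Gi b : RT b (Gi b).
Proof. by move=> y /G_loc [e ep He]; exists e => // d /He []. Qed.

Lemma Pres_Gp b k : Pres b (Gp b k).
Proof. case: k => m; apply: Pres_iter; [exact: Pres_G | exact: Pres_Gi]. Qed.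

Lemma RT_Gp b k : RT b (Gp b k).
Proof.
case: k => m; apply: RT_iter;
  [exact: Pres_G | exact: RT_G | exact: Pres_Gi | exact: RT_Gi].
Qed.

Lemma Gp_succ b k x : dom b x -> Gp b (k + 1) x = G b (Gp b k x).
Proof.
move=> Hx; case: k => m.
  by have -> : (Posz m + 1 = Posz m.+1)%R by lia.
case: m => [|m].
  by rewrite /Gp /= /G (G_Gi tau Ha Hsum).
have -> : (Negz m.+1 + 1 = Negz m)%R by rewrite !NegzE; lia.
rewrite /Gp /= /G (G_Gi tau Ha Hsum) //; exact: (@Pres_iter b (Gi b) m.+1 (@Pres_Gi b) x Hx).
Qed.

Lemma Gp_pred b k x : dom b x -> Gp b (k - 1) x = Gi b (Gp b k x).
Proof.
move=> Hx; case: k => m.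
  case: m => [|m] //.
  have -> : (Posz m.+1 - 1 = Posz m)%R by lia.
  rewrite /Gp /= /Gi (Gi_G tau Ha Hsum) //; exact: (@Pres_iter b (G b) m (@Pres_G b) x Hx).
have -> : (Negz m - 1 = Negz m.+1)%R by rewrite !NegzE; lia.
by [].
Qed.

Lemma Gp_add b (j k : int) x : dom b x -> Gp b (j + k) x = Gp b j (Gp b k x).
Proof.
move=> Hx; have Hk := @Pres_Gp b k x Hx.
case: j => m.
  elim: m => [|m IH]; first by rewrite add0r.
  have -> : (Posz m.+1 + k = (Posz m + k) + 1)%R by lia.
  by rewrite Gp_succ // IH.
elim: m => [|m IH].
  have -> : (Negz 0 + k = k - 1)%R by rewrite NegzE; lia.
  by rewrite Gp_pred.
have -> : (Negz m.+1 + k = (Negz m + k) - 1)%R by rewrite !NegzE; lia.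
by rewrite Gp_pred // IH.
Qed.

Lemma Gp_K b k x : dom b x -> Gp b (- k) (Gp b k x) = x.
Proof. by move=> Hx; rewrite -Gp_add // addNr. Qed.

Definition itinI b (x : R) (k : int) (i : 'I_n) :=
  inI b (bb a i) (bb a i.+1) (Gp b k x).

Lemma one_k b x k : dom b x -> exists2 e, 0 < e & forall d, 0 <= d < e ->
  forall i, itinI b x k i -> itinI b (x + sh b d) k i.
Proof.
move=> Hx; have [e1 e1p He1] := @RT_Gp b k x Hx.
have [i Hi] := loc tau Ha Hsum (@Pres_Gp b k x Hx).
have [e2 e2p He2] := locI Hi.
exists (Num.min e1 e2); first exact: min_pos.
move=> d /min_lt [d1 d2] j Hj; rewrite /itinI He1 //.
by rewrite -(uniq tau Ha Hsum Hi Hj); apply: He2.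
Qed.

Lemma window b x N : dom b x -> exists2 e, 0 < e & forall d, 0 <= d < e ->
  forall k : int, (absz k <= N)%N ->
  forall i, itinI b x k i -> itinI b (x + sh b d) k i.
Proof.
move=> Hx; elim: N => [|N [e0 e0p He0]].
  have [e ep He] := one_k 0 Hx; exists e => // d Hd k.
  by rewrite leqn0 absz_eq0 => /eqP ->; apply: He.
have [e1 e1p He1] := one_k (Posz N.+1) Hx.
have [e2 e2p He2] := one_k (Negz N) Hx.
exists (Num.min e0 (Num.min e1 e2)); first by rewrite !min_pos.
move=> d /min_lt [d0 /min_lt [d1 d2]] k.
case: k => m /=.
  rewrite leq_eqVlt => /orP [/eqP ->|]; first exact: He1.
  by rewrite ltnS => hm; apply: He0.
rewrite leq_eqVlt => /orP [/eqP [->]|]; first exact: He2.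
by rewrite ltnS => hm; apply: He0.
Qed.

End Dyn.

From mathcomp Require Import lra zify.
Set Default Proof Using "All".
Section Good.
Variables (R : realType) (n : nat) (a : 'I_n -> R) (tau : {perm 'I_n}).
Hypothesis Ha : forall i, 0 < a i.
Hypothesis Hsum : \sum_(i < n) a i = 1.

Definition NB (x : R) := (0 < x < 1) /\ forall j : nat, (j < n)%N -> x <> bb a j.

Lemma n_pos : (0 < n)%N.
Proof.
case: (posnP n) => // n0; exfalso; move: Hsum.
rewrite big_pred0; last by case=> i hi; exfalso; rewrite n0 in hi.
by move/eqP; rewrite eq_sym oner_eq0.
Qed.

Lemma bb0 : bb a 0 = 0. Proof. exact: S0. Qed.
Lemma bbn : bb a n = 1. Proof. exact: (S_top Ha Hsum (leqnn n)). Qed.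

Lemma fix_Gp b x : inI b 0 1 x -> G a tau b x = x -> forall k, Gp a tau b k x = x.
Proof.
move=> Hx Gx.
have Gix : Gi a tau b x = x by rewrite -{1}Gx (Gi_G tau Ha Hsum).
by case=> m; rewrite /Gp iter_fix.
Qed.

Lemma Dinf_of k d : Dset a d -> Dinf a tau (Tpow a tau k d).
Proof. by move=> Dd; right; exists k => //; exists d. Qed.

Lemma Dset_bb (i : 'I_n) : (0 < i)%N -> Dset a (bb a i).
Proof.
move=> i0; exists (val i) => //=; apply/andP; split => //.
by have := ltn_ord i; lia.
Qed.

Lemma good_dom y : Rgood a tau y -> (0 < y < 1).
Proof.
case=> /andP [y0 y1] nD.
have y0' : y != 0 by apply/eqP => E; apply: nD; left; left.
have y1' : y != 1 by apply/eqP => E; apply: nD; left; right.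
by rewrite lt_neqAle eq_sym y0' y0 lt_neqAle y1' y1.
Qed.

Lemma good_NB y : Rgood a tau y -> forall k, NB (Tpow a tau k y).
Proof.
move=> Hg k; have yd := good_dom Hg; case: (Hg) => _ nD.
have Hy : inI true 0 1 y by move: yd => /andP [u v] /=; rewrite ltW.
have Pd := Pres_Gp tau Ha Hsum k Hy; rewrite /= in Pd.
have back : forall p, Tpow a tau k y = p -> y = Tpow a tau (- k) p.
  move=> p <-; rewrite (Tpow_Gp tau Ha Hsum) -(Gp_add tau Ha Hsum) // addNr //.
have notb : forall j, (j < n)%N -> Tpow a tau k y <> bb a j.
  move=> j jn E; case: (posnP j) => [j0|jp].
  - subst j; rewrite bb0 in E.
    have Hz := Gi_spec tau Ha Hsum (b := true) (y := 0) (ltac:(by rewrite /= lexx ltr01)).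
    case: Hz => zd Gz; set z := Gi a tau true 0 in zd Gz.
    have [i Hi] := loc tau Ha Hsum zd.
    have zi : z = bb a i /\ bbtau a tau (tau i) = 0.
      move: Gz; rewrite (G_I tau Ha Hsum Hi) => Gz.
      have h1 := S_ge0 (Hct tau Ha Hsum) (Hsct tau Ha Hsum) (tau i).
      move: Hi => /= /andP [u _].
      rewrite -(bbtE tau Ha Hsum) in h1; split; lra.
    case: zi => zE _; case: (posnP i) => [i0|ip].
    + have z0 : z = 0 by rewrite zE -bb0; congr (bb a _).
      have G0 : G a tau true 0 = 0 by rewrite -{1}z0 -[X in _ = X]Gz.
      have := back _ E; rewrite (Tpow_Gp tau Ha Hsum) (fix_Gp (b := true)) //.
        by move=> y0; move: yd; rewrite y0 ltxx.
      by rewrite /= lexx ltr01.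
    + apply: nD; have := back _ E; rewrite -Gz (Tpow_Gp tau Ha Hsum).
      have -> : G a tau true z = Gp a tau true 1 z by [].
      rewrite -(Gp_add tau Ha Hsum) // => ->.
      by rewrite -(Tpow_Gp tau Ha Hsum) zE; apply: Dinf_of; apply: Dset_bb.
  - apply: nD; rewrite (back _ E); apply: Dinf_of.
    by apply: (Dset_bb (i := Ordinal jn)).
split=> //; move: Pd => /andP [u v]; rewrite v andbT lt_neqAle u andbT.
by apply/eqP => E; apply: (notb 0%N n_pos); rewrite bb0 E.
Qed.

Lemma NB_TF x (i : 'I_n) : NB x ->
  inI true (bb a i) (bb a i.+1) x = inI false (bb a i) (bb a i.+1) x.
Proof.
case=> /andP [x0 x1] nb /=.
have ni : x != bb a i by apply/eqP; apply: nb.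
have ni1 : x != bb a i.+1.
  case: (ltnP i.+1 n) => h; first by apply/eqP; apply: nb.
  have -> : i.+1 = n by apply/eqP; rewrite eqn_leq h ltn_ord.
  by rewrite bbn lt_eqF.
apply/andP/andP => [[u v]|[u v]]; split.
- by rewrite lt_neqAle eq_sym ni u.
- exact: ltW.
- exact: ltW.
- by rewrite lt_neqAle ni1 v.
Qed.

Lemma NB_dom b x : NB x -> inI b 0 1 x.
Proof. by case=> /andP [u v] _; case: b => /=; rewrite ?u ?v ?ltW. Qed.

Lemma NB_G x : NB x -> G a tau false x = G a tau true x.
Proof.
move=> Hx; have [i Hi] := loc tau Ha Hsum (NB_dom true Hx).
have Hi' := Hi; rewrite (NB_TF i Hx) in Hi'.
by rewrite (G_I tau Ha Hsum Hi) (G_I tau Ha Hsum Hi').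
Qed.

Lemma good_Gp y : Rgood a tau y -> forall k, Gp a tau false k y = Gp a tau true k y.
Proof.
move=> Hg; have NBk := good_NB Hg; rewrite (Tpow_Gp tau Ha Hsum) in NBk.
have Hy : inI true 0 1 y by apply: NB_dom (NBk 0).
suff Hit : forall m, iter m (Gi a tau false) y = iter m (Gi a tau true) y.
  case=> m; rewrite /Gp.
    elim: m => [|m IH] //=; rewrite IH; exact: (NB_G (NBk (Posz m))).
  exact: (Hit m.+1).
elim=> [|m IH] //=; rewrite IH.
set p := iter m (Gi a tau true) y.
have pd : inI true 0 1 p by apply: (Pres_iter tau Ha Hsum (f := Gi a tau true)) => //; apply: Pres_Gi.
have NBq : NB (Gi a tau true p) by have := NBk (Negz m).
rewrite -{1}(G_Gi tau Ha Hsum pd) -(NB_G NBq) (Gi_G tau Ha Hsum) //.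
exact: NB_dom.
Qed.

Lemma good_itin y (w : Omega n) : Rgood a tau y ->
  is_itin a tau y w <-> is_itint a tau y w.
Proof.
move=> Hg; have NBk := good_NB Hg.
have E := good_Gp Hg.
split=> H k; have h := H k; rewrite /J /Jt /= in h *.
  rewrite (Ttpow_Gp tau Ha Hsum) E -(Tpow_Gp tau Ha Hsum).
  by have := NB_TF (w k) (NBk k); rewrite /= => <-.
rewrite (Ttpow_Gp tau Ha Hsum) E -(Tpow_Gp tau Ha Hsum) in h.
by have := NB_TF (w k) (NBk k); rewrite /= => ->.
Qed.

End Good.

Section Topo.
Variables (n : nat).

Lemma cvg_ptws_seq (w : Omega n) (u : nat -> Omega n) :
  (forall k, \forall m \near \oo, u m k = w k) -> u @ \oo --> w.
Proof.
move=> H.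
have := @pointwise_cvgP (discrete_topology int) (discrete_topology 'I_n) (u @ \oo) w _.
move=> [_ ]; apply => t.
apply/discrete_cvg; exact: H.
Qed.

Lemma closure_seq (A : set (Omega n)) (w : Omega n) (u : nat -> Omega n) :
  (forall m, A (u m)) -> (forall k, \forall m \near \oo, u m k = w k) ->
  closure A w.
Proof.
move=> Au Hu B Bw.
have cv := cvg_ptws_seq Hu.
have Hev : \forall m \near \oo, B (u m) by exact: cv.
have [m Bm] := filter_ex Hev.
by exists (u m); split.
Qed.

Lemma coord_nbhs (w : Omega n) (k : int) : nbhs w [set v : Omega n | v k = w k].
Proof.
have := @proj_continuous int (fun _ => discrete_topology 'I_n) k w.
move/(_ [set w k] (discrete_set1 _)) => //.
Qed.

Lemma cyl_nbhs (w : Omega n) (N : nat) :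
  nbhs w [set v : Omega n | forall k : int, (absz k <= N)%N -> v k = w k].
Proof.
have FF : Filter (nbhs w) by exact: nbhs_filter.
elim: N => [|N IH].
  apply: filterS (coord_nbhs w 0) => v /= h k.
  by rewrite leqn0 absz_eq0 => /eqP ->.
have h3 := @filterI _ _ FF _ _ (@filterI _ _ FF _ _ IH (coord_nbhs w (Posz N.+1))) (coord_nbhs w (Negz N)).
apply: filterS h3 => v /= [[h0 h1] h2] [] m /=.
  rewrite leq_eqVlt => /orP [/eqP ->|] //.
  by rewrite ltnS => hm; apply: (h0 (Posz m)).
rewrite leq_eqVlt => /orP [/eqP [->]|] //.
by rewrite ltnS => hm; apply: (h0 (Negz m)).
Qed.

End Topo.

From mathcomp Require Import lra zify.
Set Default Proof Using "All".
Section Main.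
Variables (R : realType) (n : nat) (a : 'I_n -> R) (tau : {perm 'I_n}).
Hypothesis Ha : forall i, 0 < a i.
Hypothesis Hsum : \sum_(i < n) a i = 1.

Lemma Dinf_img y : Dinf a tau y ->
  ((fun p : int * nat => Tpow a tau p.1 (bb a p.2)) @` setT) y.
Proof.
case=> [[->|->]|[k _ [d [m _ <-] <-]]].
- by exists (0%R, 0%N) => //=; rewrite (bb0 tau Ha Hsum).
- by exists (0%R, n) => //=; rewrite (bbn tau Ha Hsum).
- by exists (k, m).
Qed.

Lemma dense_good (u v : R) : 0 <= u -> v <= 1 -> u < v ->
  exists y, u < y < v /\ Rgood a tau y.
Proof.
move=> u0 v1 uv.
case: (pselect (exists y, u < y < v /\ Rgood a tau y)) => // Hn; exfalso.
have sub : `]u, v[%classic `<=` (fun p : int * nat => Tpow a tau p.1 (bb a p.2)) @` setT.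
  move=> y; rewrite /= in_itv /= => /andP [uy yv].
  apply: Dinf_img; case: (pselect (Dinf a tau y)) => // nD; exfalso.
  apply: Hn; exists y; split; first by rewrite uy yv.
  split => //=; apply/andP; split; lra.
have cnt : countable (`]u, v[%classic : set R).
  apply: sub_countable (countableP setT).
  exact: card_le_trans (subset_card_le sub) (card_image_le _ _).
have := countable_lebesgue_measure0 cnt.
rewrite lebesgue_measure_itv /= lte_fin uv.
move/eqP; rewrite -EFinB eqe subr_eq0 => /eqP vu; lra.
Qed.

Lemma itin_ex b x : inI b 0 1 x ->
  exists w : Omega n, forall k, itinI a tau b x k (w k).
Proof.
move=> Hx.
have H : forall k : int, exists i : 'I_n, itinI a tau b x k i.
  move=> k; exact: (loc tau Ha Hsum (Pres_Gp tau Ha Hsum k Hx)).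
have [f Hf] := choice H.
by exists (f : Omega n).
Qed.

Lemma good_dom1 b y : Rgood a tau y -> inI b 0 1 y.
Proof.
move/(good_dom Ha Hsum) => /andP [u v].
by case: b => /=; rewrite ?u ?v ?ltW.
Qed.

Lemma good_itinI b y (v : Omega n) : Rgood a tau y -> is_itin a tau y v ->
  forall k, itinI a tau b y k (v k).
Proof.
move=> Hg Hv; case: b => k; first exact: Hv.
by have H := proj1 (good_itin Ha Hsum v Hg) Hv; apply: H.
Qed.

Lemma approx b x (w : Omega n) (m : nat) : inI b 0 1 x ->
  (forall k, itinI a tau b x k (w k)) ->
  exists v : Omega n, X0 a tau v /\ forall k : int, (absz k <= m)%N -> v k = w k.
Proof.
move=> Hx Hw.
have [e ep He] := window tau Ha Hsum m Hx.
have [y [yg [d [/andP [d0 de] yE]]]] : exists y, Rgood a tau y /\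
    exists d, (0 <= d < e) /\ y = x + sh b d.
  case: b Hx He Hw => /= /andP [x0 x1] He Hw.
  - have h1 : Num.min (x + e) 1 <= 1 by rewrite ge_min lexx orbT.
    have h2 : x < Num.min (x + e) 1 by rewrite lt_min x1 ltrDl ep.
    have [y [/andP [xy yv] yg]] := dense_good x0 h1 h2.
    exists y; split => //; exists (y - x); split; last by lra.
    by move: yv; rewrite lt_min => /andP [h _]; apply/andP; split; lra.
  - have h1 : 0 <= Num.max (x - e) 0 by rewrite le_max lexx orbT.
    have h2 : Num.max (x - e) 0 < x by rewrite gt_max x0 gtrBl ep.
    have [y [/andP [uy yx] yg]] := dense_good h1 x1 h2.
    exists y; split => //; exists (x - y); split; last by lra.
    by move: uy; rewrite gt_max => /andP [h _]; apply/andP; split; lra.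
have [v Hv] := itin_ex (good_dom1 true yg).
exists v; split; first by exists y.
move=> k km; have h1 := He d (ltac:(by rewrite d0 de)) k km (w k) (Hw k).
rewrite -yE in h1.
have h2 := good_itinI b yg Hv k.
exact (uniq tau Ha Hsum h2 h1).
Qed.


Lemma sup_dir b x (w : Omega n) : inI b 0 1 x ->
  (forall k, itinI a tau b x k (w k)) -> Xsub a tau w.
Proof.
move=> Hx Hw.
have H : forall m : nat, exists v : Omega n,
    X0 a tau v /\ forall k : int, (absz k <= m)%N -> v k = w k.
  by move=> m; exact: approx m Hx Hw.
have [u Hu] := choice H.
rewrite /Xsub; apply: (closure_seq (u := u)).
  by move=> m; case: (Hu m).
move=> k; apply: filterS (nbhs_infty_ge (absz k)) => m km.
exact: (proj2 (Hu m) k km).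
Qed.

Lemma side b x (w : Omega n) : inI b 0 1 x ->
  ~ (forall k, itinI a tau b x k (w k)) ->
  exists k0, exists2 e, 0 < e & forall d, 0 <= d < e -> forall v : Omega n,
    Rgood a tau (x + sh b d) -> is_itin a tau (x + sh b d) v -> v k0 <> w k0.
Proof.
move=> Hx nW.
have [k0 nk0] := (existsNP _).2 nW.
have [wx Hwx] := itin_ex Hx.
have [e ep He] := window tau Ha Hsum (absz k0) Hx.
exists k0, e => // d Hd v Hg Hv E.
have h1 := He d Hd k0 (leqnn _) (wx k0) (Hwx k0).
have h2 := good_itinI b Hg Hv k0.
have vw := uniq tau Ha Hsum h2 h1.
by apply: nk0; rewrite -E vw; exact: Hwx.
Qed.

Lemma side_data b x (w : Omega n) : 0 <= x <= 1 ->
  (inI b 0 1 x -> ~ (forall k, itinI a tau b x k (w k))) ->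
  exists k0, exists2 e, 0 < e & forall d, 0 <= d < e -> forall v : Omega n,
    Rgood a tau (x + sh b d) -> is_itin a tau (x + sh b d) v -> v k0 <> w k0.
Proof.
move=> /andP [x0 x1] H.
case: (boolP (inI b 0 1 x)) => Hx; first exact: side Hx (H Hx).
exists 0%R, 1 => // d /andP [d0 d1] v /(good_dom Ha Hsum) /andP [u1 u2].
exfalso; clear H; move: Hx; case: b u1 u2 => /= u1 u2; apply/negP; rewrite negbK.
- by rewrite x0 /=; lra.
- by rewrite x1 andbT; lra.
Qed.

Lemma sub_dir (w : Omega n) : Xsub a tau w ->
  (Itin a tau (@dom0 R) `|` Itint a tau (@dom1 R)) w.
Proof.
move=> Hcl; case: (pselect ((Itin a tau (@dom0 R) `|` Itint a tau (@dom1 R)) w)) => // nI.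
exfalso.
have H0 : forall x, inI true 0 1 x -> ~ (forall k, itinI a tau true x k (w k)).
  by move=> x Hx Hk; apply: nI; left; exists x.
have H1 : forall x, inI false 0 1 x -> ~ (forall k, itinI a tau false x k (w k)).
  by move=> x Hx Hk; apply: nI; right; exists x.
pose P (N : nat) (y : R) := Rgood a tau y -> forall v : Omega n,
  is_itin a tau y v -> exists k : int, (absz k <= N)%N /\ v k <> w k.
have cov : \forall N \near \oo, `[(0:R), 1]%classic `<=` P N.
  apply: ((compact_near_coveringP `[(0:R), 1]%classic).1 (@segment_compact R 0 1)).
  move=> x; rewrite /= in_itv /= => x01.
  have [kR [eR eRp HR]] := @side_data true x w x01 (H0 x).
  have [kL [eL eLp HL]] := @side_data false x w x01 (H1 x).
  near=> x' N.
  have bx : ball x (Num.min eR eL) x'.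
    near: x'; exact (@nbhsx_ballx R R x _ (min_pos tau Ha Hsum eRp eLp)).
  have MN : (maxn (absz kR) (absz kL) <= N)%N.
    by near: N; exact: nbhs_infty_ge.
  move=> Hg v Hv.
  move: bx; rewrite /ball /= lt_min => /andP [bR bL].
  case: (leP x x') => xx.
  - have E : x' = x + sh true (x' - x) by rewrite /=; lra.
    rewrite E in Hg Hv.
    exists kR; split; last apply: (HR (x' - x)) => //.
      by apply: leq_trans MN; exact: leq_maxl.
    by apply/andP; split; [lra | move: bR; rewrite distrC ger0_norm; lra].
  - have E : x' = x + sh false (x - x') by rewrite /=; lra.
    rewrite E in Hg Hv.
    exists kL; split; last apply: (HL (x - x')) => //.
      by apply: leq_trans MN; exact: leq_maxr.
    by apply/andP; split; [lra | move: bL; rewrite ger0_norm; lra].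
have [N HN] := filter_ex cov.
clear cov.
have [v [[y yg yv] vc]] := Hcl _ (cyl_nbhs w N).
have yd := good_dom Ha Hsum yg.
have y01 : `[(0:R), 1]%classic y.
  by rewrite /= in_itv /=; move: yd => /andP [u1 u2]; rewrite !ltW.
have [k [kN vk]] := HN y y01 yg v yv.
by apply: vk; apply: vc.
Unshelve. all: by end_near.
Qed.

End Main.

Theorem theorem4p2 (R : realType) (n : nat) (a : 'I_n -> R) (tau : {perm 'I_n}) :
  (2 <= n)%N ->
  (forall i, 0 < a i) ->
  \sum_(i < n) a i = 1 ->
  Xsub a tau = Itin a tau (@dom0 R) `|` Itint a tau (@dom1 R).
Proof.
move=> _ Ha Hs; apply/seteqP; split => w.
  exact: (sub_dir Ha Hs).
case=> [[x Hx Hw]|[x Hx Hw]].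
  exact: (@sup_dir R n a tau Ha Hs true x w Hx Hw).
exact: (@sup_dir R n a tau Ha Hs false x w Hx Hw).
Qed.
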